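(* Let $A=\begin{pmatrix}1&2\\0&1\end{pmatrix}$, $B=\begin{pmatrix}1&0\\2&1\end{pmatrix}$, and let $\langle A,B\rangle\le\mathrm{SL}_2(\mathbb{Z})$ be the subgroup they generate. There exists an absolute constant $C>0$ such that for every $R\ge1$ there is a free subgroup $F_R\le\langle A,B\rangle$ and a finite set $W=W_R=W^+\cup(W^+)^{-1}$, where $W^+$ is a free basis of $F_R$, satisfying: (1) $W=\sigma(W)=\tau(W)$; (2) $\max_{w\in W}\|w\|_\infty\le 18R^2$; (3) $|W|\ge CR^2$; (4) for every prime $p>36R^2$, the elements of $W$ are pairwise distinct modulo $p$.
   Context: $\|X\|_\infty$ denotes the maximum of the absolute values of the entries of the matrix $X$. For $g\in\mathrm{SL}_2(\mathbb{R})$, $\sigma(g)=(g^{-1})^T$ and $\tau(g)=JgJ$ with $J=\begin{pmatrix}0&1\\1&0\end{pmatrix}$; for a set $W$, $\sigma(W)=\{\sigma(w):w\in W\}$ and similarly for $\tau$. *)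

(* Defs.v *)
From HB Require Import structures.
From mathcomp Require Import all_boot all_order all_algebra.
From Stdlib Require Import Reals.
Set Implicit Arguments. Unset Strict Implicit. Unset Printing Implicit Defensive.
Import Order.TTheory GRing.Theory Num.Theory.

Local Open Scope ring_scope.

Notation mat := ('M[int]_2).

Definition intR (z : int) : Rdefinitions.R :=
  match z with
  | Posz n => INR n
  | Negz n => Ropp (INR n.+1)
  end.

Definition matA : mat := \matrix_(i < 2, j < 2)
  (if i == j then 1 else if (val i == 0%N) then 2 else 0).
Definition matB : mat := \matrix_(i < 2, j < 2)
  (if i == j then 1 else if (val i == 1%N) then 2 else 0).
Definition matJ : mat := \matrix_(i < 2, j < 2) (if i == j then 0 else 1).

Definition sigmaM (g : mat) : mat := (invmx g)^T.
Definition tauM (g : mat) : mat := matJ *m g *m matJ.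

Inductive in_AB : mat -> Prop :=
  | AB_one : in_AB 1%:M
  | AB_A : in_AB matA
  | AB_B : in_AB matB
  | AB_Ai : in_AB (invmx matA)
  | AB_Bi : in_AB (invmx matB)
  | AB_mul g h : in_AB g -> in_AB h -> in_AB (g *m h).

Definition letter_val (l : mat * bool) : mat :=
  if l.2 then invmx l.1 else l.1.
Definition word_val (w : seq (mat * bool)) : mat :=
  foldr (fun l acc => letter_val l *m acc) 1%:M w.
Fixpoint reduced (w : seq (mat * bool)) : bool :=
  match w with
  | l1 :: ((l2 :: _) as t) => ~~ ((l1.1 == l2.1) && (l1.2 != l2.2)) && reduced t
  | _ => true
  end.

Definition free_basis (Wp : seq mat) : Prop :=
  uniq Wp /\
  forall w : seq (mat * bool),
    w != [::] -> all (fun l => l.1 \in Wp) w -> reduced w -> word_val w != 1%:M.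

(* Main.v *)
Require Import Defs.
From HB Require Import structures.
From mathcomp Require Import all_boot all_order all_algebra.
From Stdlib Require Import Reals.
Import Order.TTheory GRing.Theory Num.Theory.
From Stdlib Require Import Lra ZArith.
From mathcomp Require Import zify ring.
From mathcomp Require cyclic.
Set Implicit Arguments. Unset Strict Implicit. Unset Printing Implicit Defensive.

(* MathComp (int matrices) + Stdlib reals. Proof via ping-pong with
   parabolic elements at Farey cusps of height in (Y/4, Y]. *)

Section NatPart.

Lemma totient_le d : totient d <= d.
Proof.
rewrite totient_count_coprime.
apply: leq_trans (_ : \sum_(0 <= i < d) 1 <= d).
  by apply: leq_sum => i _; case: coprime.
by rewrite sum_nat_const_nat muln1 subn0.
Qed.

Lemma totient0 : totient 0 = 0.
Proof. by apply/eqP; rewrite -leqn0 totient_le. Qed.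

Definition FF Y := \sum_(0 <= d < Y.+1) totient d * (Y %/ d).

Lemma FF_eq Y : 2 * FF Y = Y * Y.+1.
Proof.
elim: Y => [|Y IH]; first by rewrite /FF big_nat1 totient0.
have E : FF Y.+1 = \sum_(0 <= d < Y.+2) totient d * (d %| Y.+1) + \sum_(0 <= d < Y.+2) totient d * (Y %/ d).
  rewrite /FF -big_split /=; apply: eq_bigr => d _.
  case: d => [|d]; first by rewrite totient0.
  by rewrite divnS // mulnDr.
have E1 : \sum_(0 <= d < Y.+2) totient d * (d %| Y.+1) = Y.+1.
  rewrite big_mkord -[in RHS](cyclic.sum_totient_dvd Y.+1) [in RHS]big_mkcond /=.
  by apply: eq_bigr => d _; case: (nat_of_ord d %| Y.+1); rewrite ?muln1 ?muln0.
have E2 : \sum_(0 <= d < Y.+2) totient d * (Y %/ d) = FF Y.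
  by rewrite big_nat_recr //= divn_small // muln0 addn0.
rewrite E E1 E2; lia.
Qed.

Definition Ssum Y := \sum_((Y %/ 4).+1 <= d < Y.+1) totient d.

Lemma count_bound Y : Y * Y <= 12 * Ssum Y.
Proof.
set K := Y %/ 4.
have HK : 4 * K <= Y by rewrite /K; lia.
have HK2 : Y < 4 * K.+1 by rewrite /K; lia.
have HKY : K <= Y by lia.
have split1 : FF Y = \sum_(0 <= d < K.+1) totient d * (Y %/ d) + \sum_(K.+1 <= d < Y.+1) totient d * (Y %/ d).
  by rewrite /FF (@big_cat_nat _ _ _ K.+1) //=; lia.
have b1 : \sum_(0 <= d < K.+1) totient d * (Y %/ d) <= K * Y.
  rewrite big_nat_recl // totient0 mul0n add0n.
  apply: leq_trans (_ : \sum_(0 <= i < K) Y <= _); last by rewrite sum_nat_const_nat subn0.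
  apply: leq_sum => i _.
  apply: leq_trans (_ : i.+1 * (Y %/ i.+1) <= _); first by apply: leq_mul => //; exact: totient_le.
  by rewrite mulnC leq_divM.
have b2 : \sum_(K.+1 <= d < Y.+1) totient d * (Y %/ d) <= 3 * Ssum Y.
  rewrite /Ssum big_distrr /=.
  rewrite !big_nat; apply: leq_sum => d /andP [h1 h2].
  rewrite mulnC leq_mul2r; apply/orP; right.
  rewrite -ltnS ltn_divLR; lia.
have := FF_eq Y; rewrite split1.
nia.
Qed.

End NatPart.

Local Open Scope ring_scope.

Definition i0 : 'I_2 := @Ordinal 2 0 isT.
Definition i1 : 'I_2 := @Ordinal 2 1 isT.

Definition mk (a b c d : int) : mat := \matrix_(i < 2, j < 2)
  (if (val i == 0%N) then (if val j == 0%N then a else b) else (if val j == 0%N then c else d)).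

Lemma mk00 a b c d : mk a b c d i0 i0 = a. Proof. by rewrite mxE. Qed.
Lemma mk01 a b c d : mk a b c d i0 i1 = b. Proof. by rewrite mxE. Qed.
Lemma mk10 a b c d : mk a b c d i1 i0 = c. Proof. by rewrite mxE. Qed.
Lemma mk11 a b c d : mk a b c d i1 i1 = d. Proof. by rewrite mxE. Qed.

Lemma ord2P (i : 'I_2) : i = i0 \/ i = i1.
Proof. case: i => [[|[|i]] Hi]; [left|right|by []]; exact: val_inj. Qed.

Lemma mk_eta (M : mat) : M = mk (M i0 i0) (M i0 i1) (M i1 i0) (M i1 i1).
Proof.
apply/matrixP => i j; rewrite mxE.
by case: (ord2P i) => ->; case: (ord2P j) => ->.
Qed.

Lemma mk_inj a b c d a' b' c' d' : mk a b c d = mk a' b' c' d' ->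
  [/\ a = a', b = b', c = c' & d = d'].
Proof.
move=> E; split.
- by rewrite -(mk00 a b c d) E mk00.
- by rewrite -(mk01 a b c d) E mk01.
- by rewrite -(mk10 a b c d) E mk10.
- by rewrite -(mk11 a b c d) E mk11.
Qed.

Lemma mk_mul a b c d a' b' c' d' :
  mk a b c d *m mk a' b' c' d' =
  mk (a * a' + b * c') (a * b' + b * d') (c * a' + d * c') (c * b' + d * d').
Proof.
apply/matrixP => i j; rewrite !mxE !big_ord_recl big_ord0 !mxE /=.
case: (ord2P i) => ->; case: (ord2P j) => -> /=; by rewrite addr0.
Qed.

Lemma mk_one : 1%:M = mk 1 0 0 1 :> mat.
Proof. apply/matrixP => i j; rewrite !mxE.
by case: (ord2P i) => ->; case: (ord2P j) => ->. Qed.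

Lemma mk_inv a b c d : a * d - b * c = 1 ->
  invmx (mk a b c d) = mk d (- b) (- c) a.
Proof.
move=> H.
have E1 : mk a b c d *m mk d (- b) (- c) a = 1%:M.
  rewrite mk_mul mk_one; congr mk; lia.
have E2 : mk d (- b) (- c) a *m mk a b c d = 1%:M.
  rewrite mk_mul mk_one; congr mk; lia.
have [U _] := mulmx1_unit E1.
by rewrite -[RHS]mul1mx -(mulVmx U) -mulmxA E1 mulmx1.
Qed.

Lemma mk_tr a b c d : (mk a b c d)^T = mk a c b d.
Proof. apply/matrixP => i j; rewrite !mxE.
by case: (ord2P i) => ->; case: (ord2P j) => ->. Qed.

Lemma matA_mk : matA = mk 1 2 0 1.
Proof. apply/matrixP => i j; rewrite !mxE.
by case: (ord2P i) => ->; case: (ord2P j) => ->. Qed.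
Lemma matB_mk : matB = mk 1 0 2 1.
Proof. apply/matrixP => i j; rewrite !mxE.
by case: (ord2P i) => ->; case: (ord2P j) => ->. Qed.
Lemma matJ_mk : matJ = mk 0 1 1 0.
Proof. apply/matrixP => i j; rewrite !mxE.
by case: (ord2P i) => ->; case: (ord2P j) => ->. Qed.

Lemma tau_mk a b c d : tauM (mk a b c d) = mk d c b a.
Proof. rewrite /tauM matJ_mk !mk_mul; congr mk; ring. Qed.

Lemma sigma_mk a b c d : a * d - b * c = 1 -> sigmaM (mk a b c d) = mk d (- c) (- b) a.
Proof. by move=> H; rewrite /sigmaM mk_inv // mk_tr. Qed.

Lemma invA : invmx matA = mk 1 (-2) 0 1.
Proof. rewrite matA_mk mk_inv //; congr mk; lia. Qed.
Lemma invB : invmx matB = mk 1 0 (-2) 1.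
Proof. rewrite matB_mk mk_inv //; congr mk; lia. Qed.

Lemma Apow_nat (n : nat) : in_AB (mk 1 (2 * n%:Z) 0 1) /\ in_AB (mk 1 (- (2 * n%:Z)) 0 1).
Proof.
elim: n => [|n [IH1 IH2]].
  by rewrite mulr0 oppr0 -mk_one; split; exact: AB_one.
split.
- have -> : mk 1 (2 * n.+1%:Z) 0 1 = matA *m mk 1 (2 * n%:Z) 0 1.
    rewrite matA_mk mk_mul; congr mk; lia.
  exact: AB_mul AB_A IH1.
- have -> : mk 1 (- (2 * n.+1%:Z)) 0 1 = invmx matA *m mk 1 (- (2 * n%:Z)) 0 1.
    rewrite invA mk_mul; congr mk; lia.
  exact: AB_mul AB_Ai IH2.
Qed.

Lemma Apow (m : int) : in_AB (mk 1 (2 * m) 0 1).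
Proof.
case: m => n.
- exact: (Apow_nat n).1.
- have := (Apow_nat n.+1).2; congr (in_AB (mk _ _ _ _)); rewrite NegzE; lia.
Qed.

Lemma unit14 (a d ka : int) : a * d = 1 -> a = 1 + 4 * ka -> a = 1.
Proof.
move=> H1 H2.
have [->|/eqP an] := eqVneq a 1; first by [].
have : `|a| * `|d| = 1 by rewrite -normrM H1.
move=> H. have ha : `|a| = 1.
  have : `|a| != 0 by rewrite normr_eq0; apply/eqP=> a0; rewrite a0 mul0r in H1.
  nia.
lia.
Qed.

Lemma sanov_in_AB (a0 b0 c0 d0 : int) : a0 * d0 - b0 * c0 = 1 ->
  (exists k : int, a0 = 1 + 4 * k) -> (exists k : int, d0 = 1 + 4 * k) ->
  (exists k : int, b0 = 2 * k) -> (exists k : int, c0 = 2 * k) -> in_AB (mk a0 b0 c0 d0).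
Proof.
suff key : forall (n : nat) (a b c d : int), leq (addn (absz a) (absz c)) n ->
  a * d - b * c = 1 ->
  (exists k : int, a = 1 + 4 * k) -> (exists k : int, d = 1 + 4 * k) ->
  (exists k : int, b = 2 * k) -> (exists k : int, c = 2 * k) -> in_AB (mk a b c d).
  move=> *; by apply: (key _ a0 b0 c0 d0 (leqnn _)).
clear a0 b0 c0 d0.
elim=> [|n IH] a b c d Hn Hdet [ka Ha] [kd Hd] [kb Hb] [kc Hc].
  exfalso; lia.
have [c0|cn0] := eqVneq c 0.
  have a1 : a = 1 by apply: (unit14 (d:=d) (ka:=ka)) => //; lia.
  have d1 : d = 1 by apply: (unit14 (d:=a) (ka:=kd)) => //; lia.
  by rewrite a1 d1 c0 Hb; exact: Apow.
have [ac|ca] := leP (absz c) (absz a).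
-
  have [s|s] := leP 0 (a * c).
  + have -> : mk a b c d = matA *m mk (a - 2 * c) (b - 2 * d) c d.
      rewrite matA_mk mk_mul; congr mk; lia.
    apply: AB_mul AB_A _; apply: IH; try lia.
    * exists (ka - kc); lia. * by exists kd. * exists (kb - d); lia. * by exists kc.
  + have -> : mk a b c d = invmx matA *m mk (a + 2 * c) (b + 2 * d) c d.
      rewrite invA mk_mul; congr mk; lia.
    apply: AB_mul AB_Ai _; apply: IH; try lia.
    * exists (ka + kc); lia. * by exists kd. * exists (kb + d); lia. * by exists kc.
- have [s|s] := leP 0 (a * c).
  + have -> : mk a b c d = matB *m mk a b (c - 2 * a) (d - 2 * b).
      rewrite matB_mk mk_mul; congr mk; lia.
    apply: AB_mul AB_B _; apply: IH; try lia.
    * by exists ka. * exists (kd - kb); lia. * by exists kb. * exists (kc - a); lia.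
  + have -> : mk a b c d = invmx matB *m mk a b (c + 2 * a) (d + 2 * b).
      rewrite invB mk_mul; congr mk; lia.
    apply: AB_mul AB_Bi _; apply: IH; try lia.
    * by exists ka. * exists (kd + kb); lia. * by exists kb. * exists (kc + a); lia.
Qed.

Definition Pi (s x y : int) (v : int * int) : Prop :=
  (s * y * (y * v.1 - x * v.2) + v.2) * (s * y * (y * v.1 - x * v.2) + v.2) < v.2 * v.2.
Definition Qi (s x y : int) (v : int * int) : Prop :=
  (s * y * (y * v.1 - x * v.2) + v.2) * (s * y * (y * v.1 - x * v.2) + v.2) <= v.2 * v.2.

Lemma Pi_neg s x y X Z : Pi s x y (X, Z) -> Pi s x y (- X, - Z).
Proof. rewrite /Pi /=. have -> : (s * y * (y * - X - x * - Z) + - Z) = - (s * y * (y * X - x * Z) + Z) by ring.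
by rewrite mulrNN mulrNN. Qed.
Lemma Qi_neg s x y X Z : Qi s x y (X, Z) -> Qi s x y (- X, - Z).
Proof. rewrite /Qi /=. have -> : (s * y * (y * - X - x * - Z) + - Z) = - (s * y * (y * X - x * Z) + Z) by ring.
by rewrite mulrNN mulrNN. Qed.

Lemma sq_contra (u Z : int) : (u + Z) * (u + Z) < Z * Z -> (-u + Z) * (-u + Z) <= Z * Z -> False.
Proof. nia. Qed.

Lemma same_cusp s x y v : Pi s x y v -> Qi (- s) x y v -> False.
Proof.
rewrite /Pi /Qi.
have -> : (- s * y * (y * v.1 - x * v.2)) = - (s * y * (y * v.1 - x * v.2)) by ring.
exact: sq_contra.
Qed.

Lemma L1 (u Z : int) : 0 < Z -> (u + Z) * (u + Z) < Z * Z -> -2 * Z < u /\ u < 0.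
Proof. move=> HZ H; split; nia. Qed.
Lemma L2 (u Z : int) : 0 < Z -> (u + Z) * (u + Z) <= Z * Z -> -2 * Z <= u /\ u <= 0.
Proof. move=> HZ H; split; nia. Qed.

Lemma core_contra (a b y y' Z D : int) :
  -Z < 8 * a -> 8 * a < Z -> -Z <= 8 * b -> 8 * b <= Z ->
  y' * y' * a - y * y * b = y * y' * Z * D -> D != 0 -> 0 < Z -> 0 < y -> 0 < y' ->
  y * y + y' * y' <= 8 * y * y' -> False.
Proof.
move=> h1 h2 h3 h4 E HD HZ Hy Hy' Hr.
have hyy : 0 < y * y' by nia.
have A1 : 8 * (y' * y' * a) < y' * y' * Z by nia.
have A2 : - (y' * y' * Z) < 8 * (y' * y' * a) by nia.
have B1 : 8 * (y * y * b) <= y * y * Z by nia.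
have B2 : - (y * y * Z) <= 8 * (y * y * b) by nia.
have R1 : (y * y + y' * y') * Z <= 8 * y * y' * Z by nia.
have [Dp|Dn] : 1 <= D \/ D <= -1 by lia.
- have : y * y' * Z <= y * y' * Z * D by nia. nia.
- have : y * y' * Z * D <= - (y * y' * Z) by nia. nia.
Qed.

Lemma Pi_Z0 s x y X : Pi s x y (X, 0) -> False.
Proof. rewrite /Pi /= mulr0 subr0 addr0 => H. move: H; move: (s * y * (y * X)) => u.
have : 0 <= u * u by apply: sqr_ge0. rewrite mul0r. lia. Qed.

Lemma diff_cusp (s s' x y x' y' X Z : int) : (s = 16 \/ s = -16) -> (s' = 16 \/ s' = -16) ->
  0 < y -> 0 < y' -> y' < 4 * y -> y < 4 * y' -> x' * y - x * y' != 0 ->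
  Pi s x y (X, Z) -> Qi s' x' y' (X, Z) -> False.
Proof.
move=> Hs Hs' Hy Hy' r1 r2 HD.
have Hr : y * y + y' * y' <= 8 * y * y' by nia.
have key : forall X0 Z0 : int, 0 < Z0 -> Pi s x y (X0, Z0) -> Qi s' x' y' (X0, Z0) -> False.
  move=> X0 Z0 HZ; rewrite /Pi /Qi /= => HP HQ.
  have [p1 p2] := L1 HZ HP. have [q1 q2] := L2 HZ HQ.
  apply: (@core_contra (y * (y * X0 - x * Z0)) (y' * (y' * X0 - x' * Z0)) y y' Z0 (x' * y - x * y'))
    => //; last (by ring);
    (case: Hs => Es; case: Hs' => Es'; rewrite ?Es ?Es' in p1 p2 q1 q2; nia).
have [Zp|Zn|Z0] := ltrgtP 0 Z.
- exact: key.
- move=> /Pi_neg HP /Qi_neg HQ; apply: (key _ _ _ HP HQ); lia.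
- by rewrite -Z0 => /Pi_Z0.
Qed.

Lemma bound8 (s e Z : int) : (s = 16 \/ s = -16) -> 0 < Z ->
  -2 * Z <= s * e -> s * e <= 0 -> - Z <= 8 * e /\ 8 * e <= Z.
Proof. by case=> ->; split; lia. Qed.

Lemma region_pos (s x y X Z : int) : (s = 16 \/ s = -16) -> 0 < y -> - y < x -> x < y ->
  0 < Z -> Qi s x y (X, Z) -> X * X < Z * Z.
Proof.
move=> Hs Hy h1 h2 HZ; rewrite /Qi /= => HQ.
have [q1 q2] := L2 HZ HQ.
rewrite -mulrA in q1 q2. have [b1 b2] := bound8 Hs HZ q1 q2.
have yZ : 0 < y * Z by nia.
have hx1 : x * (y * Z) <= (y - 1) * (y * Z) by nia.
have hx2 : (- y + 1) * (y * Z) <= x * (y * Z) by nia.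
have yy : 0 < y * y by nia.
have c1 : X < Z.
  have : y * y * X < y * y * Z by nia.
  nia.
have c2 : - Z < X.
  have : - (y * y * Z) < y * y * X by nia.
  nia.
nia.
Qed.

Lemma region (s x y X Z : int) : (s = 16 \/ s = -16) -> 0 < y -> - y < x -> x < y ->
  (X != 0) || (Z != 0) -> Qi s x y (X, Z) -> X * X < Z * Z.
Proof.
move=> Hs Hy h1 h2 Hv HQ.
have [Zp|Zn|Z0] := ltrgtP 0 Z.
- exact: (region_pos Hs Hy h1 h2 Zp HQ).
- have := region_pos Hs Hy h1 h2 (Z := - Z) (X := - X) _ (Qi_neg HQ).
  rewrite !mulrNN; apply; lia.
- exfalso; move: HQ; rewrite /Qi /= -Z0 mulr0 subr0 addr0 mul0r => HQ.
  have : s * y * (y * X) = 0.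
    move: HQ; move: (s * y * (y * X)) => u HQ; nia.
  move: Hv; rewrite -Z0 orbF => /eqP HX; case: Hs => ->; nia.
Qed.

Definition act (g : mat) (v : int * int) : int * int :=
  (g i0 i0 * v.1 + g i0 i1 * v.2, g i1 i0 * v.1 + g i1 i1 * v.2).

Lemma act_mul g h v : act (g *m h) v = act g (act h v).
Proof.
rewrite [g]mk_eta [h]mk_eta mk_mul /act !mk00 !mk01 !mk10 !mk11 /=.
congr pair; ring.
Qed.

Lemma act_one v : act 1%:M v = v.
Proof. by rewrite mk_one /act !mk00 !mk01 !mk10 !mk11 /= !mul1r !mul0r addr0 add0r; case: v. Qed.

Definition pm (s x y : int) : mat := mk (1 - s * x * y) (s * x * x) (- (s * y * y)) (1 + s * x * y).

Definition swap (v : int * int) : int * int := (v.2, v.1).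

Lemma iso_map s x y X Z : ~ Qi (- s) x y (X, Z) -> Pi s x y (act (pm s x y) (X, Z)).
Proof.
rewrite /Qi /Pi /act /pm !mk00 !mk01 !mk10 !mk11 /= => H.
have -> : s * y * (y * ((1 - s * x * y) * X + s * x * x * Z) - x * (- (s * y * y) * X + (1 + s * x * y) * Z))
  + (- (s * y * y) * X + (1 + s * x * y) * Z) = Z by ring.
have -> : (- (s * y * y) * X + (1 + s * x * y) * Z) = (- s * y * (y * X - x * Z) + Z) by ring.
by rewrite ltNge; apply/negP.
Qed.

Record prm := Prm { ps : int; px : int; py : int; pf : bool }.

Definition valp (p : prm) : mat :=
  if pf p then pm (ps p) (py p) (px p) else pm (ps p) (px p) (py p).
Definition invp (p : prm) : prm := Prm (- ps p) (px p) (py p) (pf p).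
Definition sigp (p : prm) : prm := Prm (ps p) (- px p) (py p) (~~ pf p).
Definition taup (p : prm) : prm := Prm (- ps p) (px p) (py p) (~~ pf p).

Definition Pp (p : prm) (v : int * int) : Prop :=
  if pf p then Pi (- ps p) (px p) (py p) (swap v) else Pi (ps p) (px p) (py p) v.
Definition Qp (p : prm) (v : int * int) : Prop :=
  if pf p then Qi (- ps p) (px p) (py p) (swap v) else Qi (ps p) (px p) (py p) v.

Lemma swap_act_far s x y v : swap (act (pm s y x) v) = act (pm (- s) x y) (swap v).
Proof. case: v => X Z; rewrite /swap /act /pm !mk00 !mk01 !mk10 !mk11 /=; congr pair; ring. Qed.

Lemma map_prm p v : ~ Qp (invp p) v -> Pp p (act (valp p) v).
Proof.
case: p => s x y [|]; rewrite /Qp /Pp /valp /invp /=.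
- rewrite swap_act_far; case: (swap v) => X Z; rewrite opprK => H.
  by apply: iso_map; rewrite opprK.
- by case: v => X Z; apply: iso_map.
Qed.

Lemma det_pm (s x y : int) : (1 - s * x * y) * (1 + s * x * y) - (s * x * x) * (- (s * y * y)) = 1.
Proof. ring. Qed.

Lemma inv_pm s x y : invmx (pm s x y) = pm (- s) x y.
Proof. rewrite /pm mk_inv ?det_pm //; congr mk; ring. Qed.

Lemma inv_valp p : invmx (valp p) = valp (invp p).
Proof. by case: p => s x y [|]; rewrite /valp /invp /= inv_pm. Qed.

Lemma sigma_valp p : sigmaM (valp p) = valp (sigp p).
Proof.
case: p => s x y [|]; rewrite /valp /sigp /= /pm sigma_mk ?det_pm //; congr mk; ring.
Qed.

Lemma tau_valp p : tauM (valp p) = valp (taup p).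
Proof.
case: p => s x y [|]; rewrite /valp /taup /= /pm tau_mk //; congr mk; ring.
Qed.

Definition validp (C : seq (int * int)) (p : prm) : Prop :=
  (ps p = 16 \/ ps p = -16) /\ (px p, py p) \in C.

Definition goodC (C : seq (int * int)) : Prop :=
  [/\ (forall x y, (x, y) \in C -> 0 < y /\ - y < x /\ x < y),
      (forall x y x' y', (x, y) \in C -> (x', y') \in C -> y' < 4 * y),
      (forall x y x' y', (x, y) \in C -> (x', y') \in C -> (x, y) != (x', y') -> x' * y - x * y' != 0)
    & (forall x y, (x, y) \in C -> (- x, y) \in C)].

Lemma sgn16 (s s' a b : int) : (s = 16 \/ s = -16) -> (s' = 16 \/ s' = -16) ->
  0 < a -> 0 < b -> s * a = s' * b -> s = s' /\ a = b.
Proof. by case=> ->; case=> -> ha hb E; split; lia. Qed.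

Lemma sq_inj (y y' : int) : 0 < y -> 0 < y' -> y * y = y' * y' -> y = y'.
Proof. move=> h1 h2 E; nia. Qed.

Section PP.
Variable C : seq (int * int).
Hypothesis gC : goodC C.

Lemma valid_inv p : validp C p -> validp C (invp p).
Proof. case: p => s x y f [/= Hs HC]; split => //=; case: Hs => ->; [right|left]; lia. Qed.

Lemma P_Q p v : Pp p v -> Qp p v.
Proof. by rewrite /Pp /Qp /Pi /Qi; case: ifP => _ H; apply: ltW. Qed.

Lemma Pi_nz s x y X Z : Pi s x y (X, Z) -> Z != 0.
Proof. by move=> H; apply/eqP => Z0; rewrite Z0 in H; apply: (Pi_Z0 H). Qed.

Lemma v0_notin p : validp C p -> ~ Qp p (1, 1).
Proof.
case: p => s x y f [/= Hs HC]; case: gC => g1 _ _ _.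
have [Hy [h1 h2]] := g1 _ _ HC.
have Hs' : - s = 16 \/ - s = -16 by case: Hs => ->; [right|left]; lia.
rewrite /Qp /=; case: f => /= HQ.
- have := region Hs' Hy h1 h2 _ HQ; rewrite /=; lia.
- have := region Hs Hy h1 h2 _ HQ; rewrite /=; lia.
Qed.

Lemma disj_near s x y s' x' y' v : validp C (Prm s x y false) -> validp C (Prm s' x' y' false) ->
  (s, x, y) <> (s', x', y') -> Pi s x y v -> Qi s' x' y' v -> False.
Proof.
move=> [/= Hs HC] [/= Hs' HC'] Hne; case: gC => g1 g2 g3 _.
have [Hy _] := g1 _ _ HC. have [Hy' _] := g1 _ _ HC'.
have [exy|nxy] := eqVneq (x, y) (x', y').
- case: exy => ex ey; subst x' y'.
  have es : s' = - s by case: Hs => Es; case: Hs' => Es'; rewrite Es Es' in Hne *; try lia; by exfalso; apply: Hne.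
  rewrite es; exact: same_cusp.
- case: v => X Z; apply: diff_cusp => //.
  + exact: g2 HC HC'.
  + exact: g2 HC' HC.
  + exact: g3 HC HC' nxy.
Qed.

Lemma disj_prm p q v : validp C p -> validp C q -> p <> q -> Pp p v -> Qp q v -> False.
Proof.
case: p => s x y f; case: q => s' x' y' f' Vp Vq Hne.
have [[/= Hs HC] [/= Hs' HC']] := (Vp, Vq).
case: gC => g1 _ _ _.
have [Hy [h1 h2]] := g1 _ _ HC. have [Hy' [h1' h2']] := g1 _ _ HC'.
have Hsn : - s = 16 \/ - s = -16 by case: Hs => ->; [right|left]; lia.
have Hsn' : - s' = 16 \/ - s' = -16 by case: Hs' => ->; [right|left]; lia.
rewrite /Pp /Qp /=; case: f Vp Hne => Vp Hne; case: f' Vq Hne => Vq Hne.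
- apply: (@disj_near (- s) x y (- s') x' y') => //.
  + by case=> e1 e2 e3; apply: Hne; congr Prm => //; lia.
- case: v => X Z /= HP HQ.
  have nz := Pi_nz HP.
  have HQ1 : Qi (- s) x y (Z, X) := P_Q (p := Prm s x y true) (v := (X, Z)) HP.
  have r1 := region Hsn Hy h1 h2 (X := Z) (Z := X) _ HQ1.
  have r2 := region Hs' Hy' h1' h2' (X := X) (Z := Z) _ HQ.
  rewrite nz orbT in r1 r2; have := r1 isT; have := r2 isT; lia.
- case: v => X Z /= HP HQ.
  have nz := Pi_nz HP.
  have HQ1 : Qi s x y (X, Z) := P_Q (p := Prm s x y false) (v := (X, Z)) HP.
  have r1 := region Hs Hy h1 h2 (X := X) (Z := Z) _ HQ1.
  have r2 := region Hsn' Hy' h1' h2' (X := Z) (Z := X) _ HQ.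
  rewrite nz orbT in r1 r2; have := r1 isT; have := r2 isT; lia.
- apply: (@disj_near s x y s' x' y') => //.
  by case=> e1 e2 e3; apply: Hne; congr Prm.
Qed.

Lemma inj_prm p q : validp C p -> validp C q -> valp p = valp q -> p = q.
Proof.
case: p => s x y f; case: q => s' x' y' f' [/= Hs HC] [/= Hs' HC'].
case: gC => g1 _ _ _.
have [Hy [h1 h2]] := g1 _ _ HC. have [Hy' [h1' h2']] := g1 _ _ HC'.
rewrite /valp /pm /=; case: f; case: f' => /mk_inj [ea eb ec ed].
- have [es ey] : s = s' /\ y * y = y' * y'.
    apply: sgn16 => //; [nia|nia|rewrite !mulrA; exact: eb].
  subst s'. have ey' := sq_inj Hy Hy' ey. subst y'.
  have : x = x' by case: Hs => E; rewrite E in ea; nia.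
  by move=> ->.
- exfalso.
  have x'x' : x' * x' < y' * y' by nia.
  have xx : x * x < y * y by nia.
  case: Hs => E; case: Hs' => E'; rewrite E E' in eb ec; nia.
- exfalso.
  have x'x' : x' * x' < y' * y' by nia.
  have xx : x * x < y * y by nia.
  case: Hs => E; case: Hs' => E'; rewrite E E' in eb ec; nia.
- have [es ey2] : s = s' /\ y * y = y' * y'.
    apply: sgn16 => //; [nia|nia|rewrite !mulrA; lia].
  subst s'.
  have ey' := sq_inj Hy Hy' ey2. subst y'.
  have : x = x' by case: Hs => E; rewrite E in ea; nia.
  by move=> ->.
Qed.

End PP.

Definition WpC (C : seq (int * int)) : seq mat :=
  undup ([seq pm 16 c.1 c.2 | c <- C] ++ [seq pm 16 c.2 c.1 | c <- C]).

Section FB.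
Variable C : seq (int * int).
Hypothesis gC : goodC C.

Lemma Wp_mem m : m \in WpC C -> exists p, validp C p /\ ps p = 16 /\ m = valp p.
Proof.
rewrite mem_undup mem_cat => /orP [] /mapP [[x y] Hc ->] /=.
- by exists (Prm 16 x y false); split => //; split => //; left.
- by exists (Prm 16 x y true); split => //; split => //; left.
Qed.

Lemma Wp_mem_inv p : validp C p -> ps p = 16 -> valp p \in WpC C.
Proof.
case: p => s x y f [/= _ HC] /= ->; rewrite mem_undup mem_cat /valp /=.
case: f => /=; apply/orP; [right|left]; apply/mapP; by exists (x, y).
Qed.

Definition lp (p : prm) (b : bool) := if b then invp p else p.

Lemma letter_prm l : l.1 \in WpC C ->
  exists p0, [/\ validp C p0, ps p0 = 16, l.1 = valp p0 & letter_val l = valp (lp p0 l.2)].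
Proof.
case: l => m b /= /Wp_mem [p0 [V [H16 ->]]]; exists p0; split => //.
by rewrite /letter_val /lp /=; case: b => //; rewrite inv_valp.
Qed.

Lemma valid_lp p b : validp C p -> validp C (lp p b).
Proof. by case: b => // ?; apply: valid_inv. Qed.

Lemma word_pp (w : seq (mat * bool)) (l : mat * bool) :
  all (fun l => l.1 \in WpC C) (l :: w) -> reduced (l :: w) ->
  exists p, [/\ validp C p, letter_val l = valp p & Pp p (act (word_val (l :: w)) (1, 1))].
Proof.
elim: w l => [|l2 w IH] l.
- rewrite /= andbT => Hl _.
  have [p0 [V0 H16 E1 E2]] := letter_prm Hl.
  exists (lp p0 l.2); split => //; first exact: valid_lp.
  rewrite act_mul act_one E2; apply: map_prm.
  apply: (v0_notin gC); apply: valid_inv; exact: valid_lp.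
- move=> /= /andP [Hl Hall] /andP [Hred Hred2].
  have [p2 [V2 E2 HP2]] := IH l2 Hall Hred2.
  have [p0 [V0 H16 E1 El]] := letter_prm Hl.
  exists (lp p0 l.2); split => //; first exact: valid_lp.
  rewrite act_mul El; apply: map_prm => HQ.
  apply: (disj_prm gC V2 (valid_inv (valid_lp l.2 V0)) _ HP2 HQ) => Eq.
  move: Hall => /= /andP [Hl2 _].
  have [p02 [V02 H162 E12 El2]] := letter_prm Hl2.
  have Eq2 : lp p02 l2.2 = invp (lp p0 l.2).
    apply: (inj_prm gC (valid_lp _ V02) (valid_inv (valid_lp _ V0))).
    by rewrite -El2 E2 Eq.
  clear HQ HP2 IH Eq E2 Hred2.
  move: Hred; case: l Hl E1 El Eq2 => m b /= Hl E1 El Eq2.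
  case: l2 Hl2 E12 El2 Eq2 => m2 b2 /= Hl2 E12 El2 Eq2.
  move: Eq2; case: p0 V0 H16 E1 {El} => s x y f V0 /= -> ->.
  case: p02 V02 H162 E12 {El2} => s' x' y' f' V02 /= -> ->.
  rewrite /lp /invp /=; case: b; case: b2 => /=; case=> e1 e2 e3 e4; subst;
    rewrite ?eqxx //=. all: try lia.
  all: match goal with H : is_true (~~ _) |- _ => by rewrite eqxx in H end.
Qed.

Lemma free_WpC : free_basis (WpC C).
Proof.
split; first exact: undup_uniq.
case=> [|l w] // _ Hall Hred.
have [p [V _ HP]] := word_pp Hall Hred.
apply/eqP => E; rewrite E act_one in HP.
exact: (v0_notin gC V (P_Q HP)).
Qed.

End FB.

Definition ys (Y : nat) := iota (divn Y 4).+1 (subn Y (divn Y 4)).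
Definition Cpos (Y : nat) : seq (int * int) :=
  flatten [seq [seq (Posz x, Posz y) | x <- [seq x <- iota 0 y | coprime x y]] | y <- ys Y].
Definition Cneg (Y : nat) : seq (int * int) :=
  flatten [seq [seq (- Posz x, Posz y) | x <- [seq x <- iota 1 y.-1 | coprime x y]] | y <- ys Y].
Definition CC (Y : nat) := Cpos Y ++ Cneg Y.

Lemma rng_help (Y xn yn : nat) : (0 <= xn < 0 + yn)%nat ->
  (Y %/ 4 < yn < (Y %/ 4).+1 + (Y - Y %/ 4))%nat ->
  (xn < yn)%nat /\ (((divn Y 4 < yn) && (yn <= Y))%nat).
Proof. move=> h1 h2; split; lia. Qed.
Lemma rng_help2 (Y xn yn : nat) : (1 <= xn < 1 + yn.-1)%nat ->
  (Y %/ 4 < yn < (Y %/ 4).+1 + (Y - Y %/ 4))%nat ->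
  (xn < yn)%nat /\ (((divn Y 4 < yn) && (yn <= Y))%nat).
Proof. case: yn => [|yn] h1 h2 /=; split; lia. Qed.

Lemma memCC Y x y : (x, y) \in CC Y -> exists xn yn : nat,
  [/\ y = yn%:Z, x = xn%:Z \/ x = - xn%:Z, (xn < yn)%nat, coprime xn yn & (((divn Y 4 < yn) && (yn <= Y))%nat)].
Proof.
rewrite mem_cat => /orP [] /flattenP [s /mapP [yn Hy ->] /mapP [xn Hx [-> ->]]];
  move: Hx; rewrite mem_filter mem_iota => /andP [Hc Hr];
  move: Hy; rewrite mem_iota => Hy; exists xn, yn.
- by have [r1 r2] := rng_help Hr Hy; split => //; left.
- by have [r1 r2] := rng_help2 Hr Hy; split => //; right.
Qed.

Lemma memCpos Y (xn yn : nat) : (xn < yn)%nat -> coprime xn yn -> (((divn Y 4 < yn) && (yn <= Y))%nat) ->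
  (Posz xn, Posz yn) \in CC Y.
Proof.
move=> h1 h2 h3; rewrite mem_cat; apply/orP; left; apply/flattenP.
exists [seq (Posz x, Posz yn) | x <- [seq x <- iota 0 yn | coprime x yn]].
  apply/mapP; exists yn => //; rewrite mem_iota; lia.
apply/mapP; exists xn => //; rewrite mem_filter h2 mem_iota; lia.
Qed.

Lemma memCneg Y (xn yn : nat) : (0 < xn)%nat -> (xn < yn)%nat -> coprime xn yn -> (((divn Y 4 < yn) && (yn <= Y))%nat) ->
  (- Posz xn, Posz yn) \in CC Y.
Proof.
move=> h0 h1 h2 h3; rewrite mem_cat; apply/orP; right; apply/flattenP.
exists [seq (- Posz x, Posz yn) | x <- [seq x <- iota 1 yn.-1 | coprime x yn]].
  apply/mapP; exists yn => //; rewrite mem_iota; lia.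
apply/mapP; exists xn => //; rewrite mem_filter h2 mem_iota; lia.
Qed.

Lemma goodCC Y : goodC (CC Y).
Proof.
split.
- move=> x y /memCC [xn [yn [-> Hx h1 _ _]]]; case: Hx => ->; lia.
- move=> x y x' y' /memCC [xn [yn [-> _ _ _ h]]] /memCC [xn' [yn' [-> _ _ _ h']]].
  have : (Y < 4 * (divn Y 4).+1)%nat by lia.
  lia.
- move=> x y x' y' /memCC [xn [yn [ey Hx h1 c1 r1]]] /memCC [xn' [yn' [ey' Hx' h1' c1' r1']]] Hne.
  apply/eqP => E.
  have Ea : muln xn' yn = muln xn yn'.
    have : `|x' * y| = `|x * y'| by rewrite (_ : x' * y = x * y') //; lia.
    rewrite !normrM ey ey'; case: Hx => ->; case: Hx' => ->; rewrite ?normrN; lia.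
  have c1s : coprime yn xn by rewrite coprime_sym.
  have c1s' : coprime yn' xn' by rewrite coprime_sym.
  have d1 : dvdn yn yn'.
    by rewrite -(Gauss_dvdl yn' c1s) mulnC -Ea dvdn_mull.
  have d2 : dvdn yn' yn.
    by rewrite -(Gauss_dvdl yn c1s') mulnC Ea dvdn_mull.
  have eyy : yn = yn' by apply/eqP; rewrite eqn_dvd d1 d2.
  move: Hne; rewrite ey ey' eyy; have -> : x' = x by rewrite ey ey' eyy in E; nia.
  by rewrite eqxx.
- move=> x y /memCC [xn [yn [-> Hx h1 c1 r1]]]; case: Hx => ->.
  + case: xn h1 c1 => [|xn] h1 c1; first by rewrite oppr0; exact: memCpos.
    exact: memCneg.
  + rewrite opprK; exact: memCpos.
Qed.

Lemma count_tot (y : nat) : count (fun x => coprime x y) (iota 0 y) = totient y.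
Proof.
rewrite totient_count_coprime -sum1_count big_mkcond /= /index_iota subn0.
by apply: eq_bigr => i _; rewrite coprime_sym; case: coprime.
Qed.

Lemma size_Cpos Y : size (Cpos Y) = Ssum Y.
Proof.
rewrite /Cpos size_allpairs_dep /Ssum sumnE big_map /index_iota subSS.
by apply: eq_bigr => y _; rewrite size_filter count_tot.
Qed.

Lemma uniq_Cpos Y : uniq (Cpos Y).
Proof.
apply: allpairs_uniq_dep.
- exact: iota_uniq.
- by move=> y _; apply: filter_uniq; exact: iota_uniq.
- move=> [a b] [a' b'] _ _ /= [e1 e2].
  by move: e1 e2 => -> ->.
Qed.

Definition WW (Y : nat) : seq mat := WpC (CC Y) ++ map invmx (WpC (CC Y)).

Lemma invpK p : invp (invp p) = p.
Proof. by case: p => s x y f; rewrite /invp /= opprK. Qed.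
Lemma sigpK p : sigp (sigp p) = p.
Proof. by case: p => s x y f; rewrite /sigp /= opprK negbK. Qed.
Lemma taupK p : taup (taup p) = p.
Proof. by case: p => s x y f; rewrite /taup /= opprK negbK. Qed.

Section WWsec.
Variable Y : nat.
Let C := CC Y.
Let gC := goodCC Y.

Lemma memWW w : w \in WW Y <-> exists p, validp C p /\ w = valp p.
Proof.
split.
- rewrite mem_cat => /orP [/(Wp_mem) [p [V [_ ->]]]|/mapP [m /(Wp_mem) [p [V [_ ->]]] ->]].
  + by exists p.
  + by exists (invp p); split; [apply: valid_inv|rewrite inv_valp].
- move=> [p [V ->]]; rewrite mem_cat; apply/orP.
  have [Hs _] := V; case: Hs => Hs.
  + by left; apply: Wp_mem_inv.
  + right; apply/mapP; exists (valp (invp p)).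
      by apply: Wp_mem_inv; [apply: valid_inv|rewrite /invp /= Hs opprK].
    by rewrite inv_valp invpK.
Qed.

Lemma valid_sig p : validp C p -> validp C (sigp p).
Proof. case: p => s x y f [/= Hs HC]; split => //=; case: gC => _ _ _ g4; exact: g4. Qed.
Lemma valid_tau p : validp C p -> validp C (taup p).
Proof. case: p => s x y f [/= Hs HC]; split => //=; case: Hs => ->; [right|left]; lia. Qed.

Lemma WW_sigma w : (w \in WW Y) = (w \in map sigmaM (WW Y)).
Proof.
apply/idP/idP.
- move=> /memWW [p [V ->]]; apply/mapP; exists (valp (sigp p)).
    by apply/memWW; exists (sigp p); split => //; apply: valid_sig.
  by rewrite sigma_valp sigpK.
- move=> /mapP [w' /memWW [p [V ->]] ->]; apply/memWW; exists (sigp p).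
  by split; [apply: valid_sig | rewrite sigma_valp].
Qed.

Lemma WW_tau w : (w \in WW Y) = (w \in map tauM (WW Y)).
Proof.
apply/idP/idP.
- move=> /memWW [p [V ->]]; apply/mapP; exists (valp (taup p)).
    by apply/memWW; exists (taup p); split => //; apply: valid_tau.
  by rewrite tau_valp taupK.
- move=> /mapP [w' /memWW [p [V ->]] ->]; apply/memWW; exists (taup p).
  by split; [apply: valid_tau | rewrite tau_valp].
Qed.

Lemma WW_Wp w : w \in WW Y <-> (w \in WpC C \/ exists2 x, x \in WpC C & w = invmx x).
Proof.
rewrite /WW mem_cat; split.
- by move=> /orP [H|/mapP [x Hx ->]]; [left|right; exists x].
- by move=> [H|[x Hx ->]]; apply/orP; [left|right; apply/mapP; exists x].
Qed.

Lemma count_WW : (Ssum Y <= size (undup (WW Y)))%nat.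
Proof.
rewrite -size_Cpos -(size_map (fun c => pm 16 c.1 c.2)).
apply: uniq_leq_size.
- rewrite map_inj_in_uniq ?uniq_Cpos //.
  move=> [x y] [x' y'] H1 H2 /= E.
  have V1 : validp C (Prm 16 x y false) by split; [left|rewrite /C mem_cat H1].
  have V2 : validp C (Prm 16 x' y' false) by split; [left|rewrite /C mem_cat H2].
  by have := inj_prm gC V1 V2 E => -[-> ->].
- move=> w /mapP [[x y] H ->]; rewrite mem_undup; apply/memWW.
  exists (Prm 16 x y false); split => //; split; [by left|by rewrite /C mem_cat H].
Qed.

Lemma in_AB_Wp m : m \in WpC C -> in_AB m.
Proof.
move=> /Wp_mem [[s x y f] [_ [/= -> ->]]].
rewrite /valp /pm; case: f => /=; apply: sanov_in_AB; try (by rewrite det_pm);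
  [exists (- 4 * y * x)|exists (4 * y * x)|exists (8 * y * y)|exists (- 8 * x * x)
  |exists (- 4 * x * y)|exists (4 * x * y)|exists (8 * x * x)|exists (- 8 * y * y)]; ring.
Qed.

Lemma WW_bound w : w \in WW Y -> forall i j, `|w i j| <= 16 * Y%:Z * Y%:Z.
Proof.
move=> /memWW [[s x y f] [[/= Hs HC] ->]] i j.
have [xn [yn [ey Hx h1 _ /andP [_ h2]]]] := memCC HC.
have bx1 : x <= y - 1 by case: Hx => ->; lia.
have bx2 : - (y - 1) <= x by case: Hx => ->; lia.
have by0 : 0 < y by lia.
have byY : y <= Y%:Z by lia.
have xy1 : x * y <= (y - 1) * y by nia.
have xy2 : - ((y - 1) * y) <= x * y by nia.
have yy : y * y <= Y%:Z * Y%:Z by nia.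
have xx : x * x <= y * y by nia.
have xx0 : 0 <= x * x by nia.
clear Hx h1 h2 ey HC.
rewrite /valp /pm; case: (ord2P i) => ->; case: (ord2P j) => ->; case: f;
  rewrite ?mk00 ?mk01 ?mk10 ?mk11; case: Hs => ->; rewrite /=; try rewrite (mulrC y x); nia.
Qed.

End WWsec.

Lemma mod_distinct (a b : int) (p : nat) : `|a - b| < p%:Z -> a != b ->
  modz a p%:Z <> modz b p%:Z.
Proof.
move=> H Hne E.
have p0 : 0 < p%:Z by lia.
have Ea := divz_eq a p%:Z. have Eb := divz_eq b p%:Z.
have : a - b = (divz a p%:Z - divz b p%:Z) * p%:Z by rewrite {1}Ea {1}Eb E; ring.
move: (divz a p%:Z - divz b p%:Z) => q Eq.
move/eqP: Hne; apply.
have : q = 0 by nia.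
move=> q0; rewrite q0 mul0r in Eq; lia.
Qed.

Local Close Scope ring_scope.

Lemma intR_abs (z : int) : Rabs (intR z) = INR (absz z).
Proof.
case: z => n; rewrite /intR.
- by rewrite Rabs_pos_eq; [|apply: pos_INR].
- by rewrite Rabs_Ropp Rabs_pos_eq; [|apply: pos_INR].
Qed.

Lemma floor_nat (r : R) : Rle 1 r -> exists Y : nat, (1 <= Y)%nat /\ Rle (INR Y) r /\ Rlt r (INR Y + 1).
Proof.
move=> Hr.
have [h1 h2] := base_Int_part r.
set z := Int_part r in h1 h2.
have z1 : (1 <= z)%Z.
  have : (0 < z)%Z by apply: lt_0_IZR; lra.
  move=> ?; Lia.lia.
exists (Z.to_nat z).
have E : INR (Z.to_nat z) = IZR z by rewrite INR_IZR_INZ Stdlib.ZArith.Znat.Z2Nat.id //; Lia.lia.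
rewrite E; split; last by split; lra.
have : Rle 1 (INR (Z.to_nat z)) by rewrite E; apply: IZR_le.
move=> H; have : (1 <= Z.to_nat z)%coq_nat by apply: INR_le.
by move/ssrnat.leP.
Qed.

Theorem lemma2p17 :
  exists C : Rdefinitions.R, Rlt 0 C /\
  forall r : Rdefinitions.R, Rle 1 r ->
  exists (Wp W : seq mat),
    (forall x, x \in Wp -> in_AB x) /\
    free_basis Wp /\
    (forall w, w \in W <-> (w \in Wp \/ exists2 x, x \in Wp & w = invmx x)) /\
    (forall w, (w \in W) = (w \in map sigmaM W)) /\
    (forall w, (w \in W) = (w \in map tauM W)) /\
    (forall w, w \in W -> forall i j : 'I_2,
        Rle (Rabs (intR (w i j))) (Rmult 18 (Rmult r r))) /\
    Rle (Rmult C (Rmult r r)) (INR (size (undup W))) /\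
    (forall p : nat, prime p -> Rlt (Rmult 36 (Rmult r r)) (INR p) ->
       forall w1 w2, w1 \in W -> w2 \in W -> w1 <> w2 ->
       exists i j : 'I_2, modz (w1 i j) (Posz p) <> modz (w2 i j) (Posz p)).
Proof.
exists (1/48)%R; split; first lra.
move=> r Hr.
have [Y [HY1 [HYr HrY]]] := floor_nat Hr.
have HY0 : Rle 1 (INR Y) by apply: (le_INR 1); apply/ssrnat.leP.
have I16 : INR 16 = 16%R by simpl; lra.
have I36 : INR 36 = 36%R by simpl; lra.
have I12 : INR 12 = 12%R by simpl; lra.
have E16 : INR (16 * Y * Y) = (16 * INR Y * INR Y)%R by rewrite !mult_INR I16.
have E36 : INR (36 * Y * Y) = (36 * INR Y * INR Y)%R by rewrite !mult_INR I36.
have E12 : INR (Y * Y) = (INR Y * INR Y)%R by rewrite !mult_INR.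
have E12' : INR (12 * Ssum Y) = (12 * INR (Ssum Y))%R by rewrite !mult_INR I12.
exists (WpC (CC Y)), (WW Y).
split; [|split; [|split; [|split; [|split; [|split; [|split]]]]]].
- by move=> x Hx; apply: in_AB_Wp Hx.
- exact: free_WpC (goodCC Y).
- by move=> w; apply: WW_Wp.
- by move=> w; apply: WW_sigma.
- by move=> w; apply: WW_tau.
- move=> w Hw i j; rewrite intR_abs.
  have Hb := WW_bound Hw i j.
  have Hn : (absz (w i j) <= 16 * Y * Y)%nat by lia.
  apply: Rle_trans (le_INR _ _ (ssrnat.leP Hn)) _.
  rewrite E16; nra.
- have h1 := count_WW Y; have h2 := count_bound Y.
  have i1 := le_INR _ _ (ssrnat.leP h1).
  have i2 := le_INR _ _ (ssrnat.leP h2).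
  rewrite E12 E12' in i2.
  nra.
- move=> p Hp Hlt w1 w2 H1 H2 Hne.
  have Hp36 : (36 * Y * Y < p)%nat.
    apply/ssrnat.ltP; apply: INR_lt; rewrite E36; nra.
  have [i [j Hij]] : exists i j, w1 i j != w2 i j.
    case: (eqVneq (w1 i0 i0) (w2 i0 i0)) => [e00|n]; last by exists i0, i0.
    case: (eqVneq (w1 i0 i1) (w2 i0 i1)) => [e01|n]; last by exists i0, i1.
    case: (eqVneq (w1 i1 i0) (w2 i1 i0)) => [e10|n]; last by exists i1, i0.
    case: (eqVneq (w1 i1 i1) (w2 i1 i1)) => [e11|n]; last by exists i1, i1.
    by exfalso; apply: Hne; rewrite [w1]mk_eta [w2]mk_eta e00 e01 e10 e11.
  exists i, j; apply: mod_distinct => //.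
  have b1 := WW_bound H1 i j; have b2 := WW_bound H2 i j.
  lia.
Qed.
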